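(* Let $G=\mathrm{GL}_n$ over $L$ with diagonal torus $T$ and upper triangular Borel $B$, let $Q=M\ltimes N$, $Q'=M'\ltimes N'$ be standard parabolic subgroups and $w\in{}^{Q'}W^Q$. Let $Q^M_{w^{-1}}=M\cap w^{-1}Q'w=M_{w^{-1}}\ltimes N_{w^{-1}}$ (a standard parabolic of $M$) and $Q^{M'}_w=M'\cap wQw^{-1}=M'_w\ltimes N'_w$ (a standard parabolic of $M'$), and consider the standard parabolic subgroups $Q_{w^{-1}}=M_{w^{-1}}\ltimes(N_{w^{-1}}N)$ and $Q'_w=M'_w\ltimes(N'_wN')$ of $G$. Then for every $z\in Z_{M'}^+$, $$\delta_{Q'_w}(z)\le\delta_{Q_{w^{-1}}}(w^{-1}zw).$$ Moreover, if $w\ne1$, there exists $z\in Z_{M'}^+$ with $\delta_{Q'_w}(z)<\delta_{Q_{w^{-1}}}(w^{-1}zw)$.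
   Context: $L/\mathbf Q_p$ finite with ring of integers $\mathcal O_L$, uniformiser $\varpi_L$. $W$ is the Weyl group of $(G,T)$, $W_Q$ that of $M$, ${}^{Q'}W^Q$ the minimal length representatives of $W_{Q'}\backslash W/W_Q$. For a parabolic $P=M_P\ltimes N_P$, $\delta_P(m)=|\det(\mathrm{Ad}(m)|_{\mathrm{Lie}N_P(L)})|_L$ for $m\in M_P(L)$. $Z_{M'}^+=\{z\in Z_{M'}(L):zN'(\mathcal O_L)z^{-1}\subset N'(\mathcal O_L),\ z^{-1}\overline N'^1z\subset\overline N'^1\}$ where $\overline N'^1$ is the kernel of reduction mod $\varpi_L$ on the opposite unipotent $\overline N'(\mathcal O_L)$. Note $Z_{M'}\subset M'_w$ and $w^{-1}M'_ww=M_{w^{-1}}$. *)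

(* Defs.v *)
From HB Require Import structures.
From mathcomp Require Import all_boot all_order all_algebra all_fingroup.
Set Implicit Arguments. Unset Strict Implicit. Unset Printing Implicit Defensive.
Import Order.TTheory GRing.Theory Num.Theory.
Local Open Scope ring_scope.

(* Standard parabolics of GL_n are parametrised by subsets J of the simple
   roots alpha_k = e_k - e_(k+1), k : 'I_n.-1 (0-indexed coordinates). *)

Section Defs.
Variables (L : fieldType) (R : realFieldType) (n : nat).

Definition nonarch_dv_abs (absL : L -> R) (pi : L) : Prop :=
  [/\ absL 0 = 0,
      (forall x, x != 0 -> 0 < absL x),
      (forall x y, absL (x * y) = absL x * absL y),
      (forall x y, absL (x + y) <= Num.max (absL x) (absL y)) &
      [/\ 0 < absL pi, absL pi < 1 & (forall x, absL x < 1 -> absL x <= absL pi)]].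

Definition sameblk (J : {set 'I_n.-1}) (i j : 'I_n) : bool :=
  [forall k : 'I_n.-1, ((minn i j <= k) && (k < maxn i j))%N ==> (k \in J)].

(* the block of i is strictly before the block of j (root e_i - e_j in N_J) *)
Definition before (J : {set 'I_n.-1}) (i j : 'I_n) : bool :=
  ((i < j)%N && ~~ sameblk J i j).

Definition Qset (J : {set 'I_n.-1}) (g : 'M[L]_n) : bool :=
  (g \in unitmx) && [forall i, forall j, before J j i ==> (g i j == 0)].
Definition Mset (J : {set 'I_n.-1}) (g : 'M[L]_n) : bool :=
  (g \in unitmx) && [forall i, forall j, ~~ sameblk J i j ==> (g i j == 0)].
Definition Nset (J : {set 'I_n.-1}) (g : 'M[L]_n) : bool :=
  [forall i, forall j, before J i j || (g i j == (i == j)%:R)].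
Definition Nbarset (J : {set 'I_n.-1}) (g : 'M[L]_n) : bool :=
  [forall i, forall j, before J j i || (g i j == (i == j)%:R)].

Definition integral_mx (absL : L -> R) (g : 'M[L]_n) : Prop :=
  forall i j, absL (g i j) <= 1.

Definition N_O (absL : L -> R) (J : {set 'I_n.-1}) (g : 'M[L]_n) : Prop :=
  Nset J g /\ integral_mx absL g.
Definition Nbar_1 (absL : L -> R) (J : {set 'I_n.-1}) (g : 'M[L]_n) : Prop :=
  [/\ Nbarset J g, integral_mx absL g &
      forall i j, absL (g i j - (i == j)%:R) < 1].

Definition Zset (J : {set 'I_n.-1}) (z : 'M[L]_n) : Prop :=
  Mset J z /\ forall m, Mset J m -> z *m m = m *m z.

Definition Zplus (absL : L -> R) (J : {set 'I_n.-1}) (z : 'M[L]_n) : Prop :=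
  [/\ Zset J z,
      (forall x, N_O absL J x -> N_O absL J (z *m x *m invmx z)) &
      (forall x, Nbar_1 absL J x -> Nbar_1 absL J (invmx z *m x *m z))].

(* Lie N_J has basis E_p, p in rootsN J *)
Definition rootsN (J : {set 'I_n.-1}) : {set 'I_n * 'I_n} :=
  [set p | before J p.1 p.2].

(* matrix of Ad(m) : X |-> m X m^-1 restricted to Lie N_J in the basis E_p *)
Definition Ad_mx (J : {set 'I_n.-1}) (m : 'M[L]_n) : 'M[L]_#|rootsN J| :=
  \matrix_(a, b) (m (enum_val a).1 (enum_val b).1 *
                  invmx m (enum_val b).2 (enum_val a).2).

Definition delta (absL : L -> R) (J : {set 'I_n.-1}) (m : 'M[L]_n) : R :=
  absL (\det (Ad_mx J m)).

End Defs.

(* Weyl group W = S_n, w acting by the permutation matrix perm_mx w *)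
Definition Wpar (n : nat) (J : {set 'I_n.-1}) : {set 'S_n} :=
  [set s : 'S_n | [forall i, sameblk J i (s i)]].

Definition perm_length (n : nat) (s : 'S_n) : nat :=
  #|[set p : 'I_n * 'I_n | (p.1 < p.2)%N && (s p.2 < s p.1)%N]|.

Definition minrep (n : nat) (J' J : {set 'I_n.-1}) (w : 'S_n) : Prop :=
  forall u v, u \in Wpar J' -> v \in Wpar J ->
    (perm_length w <= perm_length (u * w * v)%g)%N.

(* Main.v *)
Require Import Defs.
From HB Require Import structures.
From mathcomp Require Import all_boot all_order all_algebra all_fingroup.
From mathcomp Require Import zify.
Import Order.TTheory GRing.Theory Num.Theory.
Local Open Scope ring_scope.
Set Implicit Arguments. Unset Strict Implicit. Unset Printing Implicit Defensive.

Section Mat.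
Variables (L : fieldType) (n : nat).

Lemma sameblk_refl (J : {set 'I_n.-1}) i : sameblk J i i.
Proof.
apply/forallP => k; apply/implyP; rewrite minnn maxnn => /andP [h1 h2].
by move: (leq_ltn_trans h1 h2); rewrite ltnn.
Qed.

Lemma sameblk_sym (J : {set 'I_n.-1}) i j : sameblk J i j = sameblk J j i.
Proof. by rewrite /sameblk minnC maxnC. Qed.

Lemma conj_entry (s : 'S_n) (A : 'M[L]_n) a b :
  (perm_mx s *m A *m perm_mx s^-1) a b = A (s a) (s b).
Proof. by rewrite -row_permE -col_permE !mxE. Qed.

Lemma conj_entry' (s : 'S_n) (A : 'M[L]_n) a b :
  (perm_mx s^-1 *m A *m perm_mx s) a b = A ((s^-1)%g a) ((s^-1)%g b).
Proof. by have := conj_entry (s^-1)%g A a b; rewrite invgK. Qed.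

Definition Emx (i j : 'I_n) : 'M[L]_n := 1%:M + delta_mx i j.

Lemma Emx_unit i j : i != j -> Emx i j \in unitmx.
Proof.
move=> ij; apply: (proj1 (@mulmx1_unit _ _ _ (1%:M - delta_mx i j) _)).
rewrite /Emx mulmxDl !mulmxBr !mul1mx !mulmx1 mul_delta_mx_cond.
by rewrite eq_sym (negbTE ij) mulr0n subr0 subrK.
Qed.

Lemma Emx_entry i j a b :
  Emx i j a b = (a == b)%:R + ((a == i) && (b == j))%:R.
Proof. by rewrite !mxE. Qed.

Lemma Mset_E (J : {set 'I_n.-1}) i j : i != j -> Mset J (Emx i j) = sameblk J i j.
Proof.
move=> ij; rewrite /Mset Emx_unit //=; apply/forallP/idP.
- move=> H; apply/negPn/negP => nsb; have := forallP (H i) j.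
  by rewrite nsb /= Emx_entry (negbTE ij) !eqxx add0r oner_eq0.
- move=> sb a; apply/forallP => b; apply/implyP => nsb; rewrite Emx_entry.
  have ab : a != b by apply: contraNneq nsb => ->; rewrite sameblk_refl.
  have -> : ((a == i) && (b == j)) = false.
    by apply/negbTE/andP => [[/eqP ai /eqP bj]]; subst; rewrite sb in nsb.
  by rewrite (negbTE ab) addr0.
Qed.

Lemma conj_Emx (s : 'S_n) i j :
  perm_mx s *m Emx i j *m perm_mx s^-1 = Emx ((s^-1)%g i) ((s^-1)%g j).
Proof.
apply/matrixP => a b; rewrite conj_entry !Emx_entry (inj_eq perm_inj).
by rewrite !(canF_eq (permK s)).
Qed.


Lemma sbJ1 (J J' J1 : {set 'I_n.-1}) (w : 'S_n) :
  (forall g : 'M[L]_n, Mset J1 g =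
     Mset J g && Mset J' (perm_mx w *m g *m perm_mx (w^-1)%g)) ->
  forall i j, sameblk J1 i j =
    sameblk J i j && sameblk J' ((w^-1)%g i) ((w^-1)%g j).
Proof.
move=> H i j; case: (eqVneq i j) => [->|ij]; first by rewrite !sameblk_refl.
by have := H (Emx i j); rewrite conj_Emx !Mset_E // (inj_eq perm_inj).
Qed.

Lemma sbJ2 (J J' J2 : {set 'I_n.-1}) (w : 'S_n) :
  (forall g : 'M[L]_n, Mset J2 g =
     Mset J' g && Mset J (perm_mx (w^-1)%g *m g *m perm_mx w)) ->
  forall i j, sameblk J2 i j = sameblk J' i j && sameblk J (w i) (w j).
Proof.
move=> H i j; case: (eqVneq i j) => [->|ij]; first by rewrite !sameblk_refl.
have := H (Emx i j); have := conj_Emx (w^-1)%g i j; rewrite invgK => ->.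
by rewrite !Mset_E // (inj_eq perm_inj).
Qed.

Lemma inv_diag (d : 'rV[L]_n) : (forall i, d 0 i != 0) ->
  invmx (diag_mx d) = diag_mx (\row_i (d 0 i)^-1).
Proof.
move=> nz.
have H : diag_mx (\row_i (d 0 i)^-1) *m diag_mx d = 1%:M.
  apply/matrixP => a b; rewrite mul_diag_mx !mxE.
  by case: (eqVneq a b) => [->|ab]; rewrite ?mulr1n ?mulr0n ?mulr0 ?mulVf.
have [_ U] := mulmx1_unit H.
by rewrite -[invmx _]mul1mx -H -mulmxA mulmxV // mulmx1.
Qed.

Lemma diag_triple (d e : 'rV[L]_n) (A : 'M[L]_n) a b :
  (diag_mx d *m A *m diag_mx e) a b = d 0 a * A a b * e 0 b.
Proof. by rewrite mul_mx_diag mxE mul_diag_mx mxE. Qed.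

Lemma Ad_diag (J : {set 'I_n.-1}) (d : 'rV[L]_n) : (forall i, d 0 i != 0) ->
  Ad_mx J (diag_mx d) =
  diag_mx (\row_a (d 0 (enum_val a).1 / d 0 (enum_val a).2)).
Proof.
move=> nz; apply/matrixP => a b; rewrite /Ad_mx inv_diag // !mxE.
case: (eqVneq a b) => [->|ab]; first by rewrite !eqxx !mulr1n.
rewrite mulr0n.
have : enum_val a != enum_val b by apply: contra ab => /eqP/enum_val_inj ->.
case: (enum_val a) => p1 p2; case: (enum_val b) => q1 q2 /=.
case: (eqVneq p1 q1) => [->|]; last by rewrite mulr0n mul0r.
case: (eqVneq q2 p2) => [->|]; last by rewrite mulr0n mulr0.
by rewrite eqxx.
Qed.

End Mat.
Arguments Emx {L n}.

Section Abs.
Variables (L : fieldType) (R : realFieldType) (absL : L -> R) (pi : L).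
Hypothesis Hab : nonarch_dv_abs absL pi.

Lemma abs0 : absL 0 = 0. Proof. by case: Hab => h _ _ _ _; apply: h. Qed.
Lemma absM x y : absL (x * y) = absL x * absL y. Proof. by case: Hab => _ _ h _ _; apply: h. Qed.
Lemma abs_gt0 x : x != 0 -> 0 < absL x. Proof. by move=> nz; case: Hab => _ h _ _ _; apply: h. Qed.
Arguments abs_gt0 [x].
Lemma abs_ge0 x : 0 <= absL x.
Proof. by case: (eqVneq x 0) => [->|/abs_gt0/ltW //]; rewrite abs0. Qed.
Lemma abs1 : absL 1 = 1.
Proof.
have h := abs_gt0 (oner_neq0 L).
have := absM 1 1; rewrite mulr1 => e.
by apply: (mulfI (lt0r_neq0 h)); rewrite -e mulr1.
Qed.
Lemma absV x : x != 0 -> absL x^-1 = (absL x)^-1.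
Proof.
move=> nz; have h := abs_gt0 nz.
apply: (mulfI (lt0r_neq0 h)); rewrite -absM !mulfV ?abs1 //.
exact: lt0r_neq0.
Qed.
Lemma abs_delta (b : bool) : absL (b%:R) <= 1.
Proof. by case: b; rewrite ?abs1 ?abs0. Qed.
Lemma pi_props : [/\ pi != 0, 0 < absL pi & absL pi < 1].
Proof.
case: Hab => _ _ _ _ [h1 h2 _]; split => //.
by apply: contraTneq h1 => ->; rewrite abs0 ltxx.
Qed.

Lemma delta_diag n (J : {set 'I_n.-1}) (d : 'rV[L]_n) : (forall i, d 0 i != 0) ->
  delta absL J (diag_mx d) =
  \prod_(p in rootsN J) (absL (d 0 p.1) / absL (d 0 p.2)).
Proof.
move=> nz; rewrite /delta Ad_diag // det_diag.
rewrite (big_morph absL absM abs1) [RHS]big_enum_val /=.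
apply: eq_bigr => a _; rewrite mxE absM absV //.
Qed.


Lemma mul_mx_delta n (A : 'M[L]_n) (i j x y : 'I_n) :
  (A *m (delta_mx i j : 'M[L]_n)) x y = A x i * (j == y)%:R.
Proof.
rewrite mxE (bigD1 i) //= big1 => [|k ki]; rewrite !mxE ?eqxx /=.
  by rewrite addr0 eq_sym.
by rewrite (negbTE ki) mulr0.
Qed.

Lemma mul_delta_mx n (A : 'M[L]_n) (i j x y : 'I_n) :
  ((delta_mx i j : 'M[L]_n) *m A) x y = (x == i)%:R * A j y.
Proof.
rewrite mxE (bigD1 j) //= big1 => [|k kj]; rewrite !mxE ?eqxx /=.
  by rewrite addr0 andbT.
by rewrite (negbTE kj) andbF mul0r.
Qed.

Lemma Zplus_form n (J' : {set 'I_n.-1}) (z : 'M[L]_n) : Zplus absL J' z ->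
  exists d : 'rV[L]_n, [/\ z = diag_mx d, (forall i, d 0 i != 0) &
    forall a b : 'I_n, (a < b)%N -> absL (d 0 a) <= absL (d 0 b)].
Proof.
case=> [[/andP [Uz offz] comm] NO _].
have commD i j : i != j -> sameblk J' i j ->
    z *m delta_mx i j = delta_mx i j *m z.
  move=> ij sb; have := comm (Emx i j); rewrite Mset_E // => /(_ sb).
  rewrite /Emx mulmxDr mulmxDl mulmx1 mul1mx; exact: addrI.
have off a b : a != b -> z a b = 0.
  move=> ab; case sb: (sameblk J' a b).
    have := congr1 (fun M : 'M[L]_n => M a a) (commD b a _ _).
    rewrite mul_mx_delta mul_delta_mx eqxx (negbTE ab) mulr1 mul0r; apply.
      by rewrite eq_sym.
    by rewrite sameblk_sym.
  by apply/eqP; have := forallP (forallP offz a) b; rewrite sb.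
set d := \row_i z i i.
have zd : z = diag_mx d.
  apply/matrixP => a b; rewrite !mxE.
  by case: (eqVneq a b) => [->|ab]; rewrite ?mulr1n // off // mulr0n.
have nz i : d 0 i != 0.
  by move: Uz; rewrite unitmxE zd det_diag unitfE => /prodf_neq0 H; apply: H.
exists d; split=> // a b ab.
have nab : a != b by rewrite neq_ltn ab.
case sb: (sameblk J' a b).
  have := congr1 (fun M : 'M[L]_n => M a b) (commD a b nab sb).
  by rewrite mul_mx_delta mul_delta_mx !eqxx mulr1 mul1r !mxE => ->.
have [] := NO (Emx a b).
  split.
    apply/forallP => i; apply/forallP => j; rewrite Emx_entry.
    case: (eqVneq i a) => [->|ia]; case: (eqVneq j b) => [->|jb] /=;
      rewrite ?addr0 ?eqxx ?orbT //.
    by rewrite /before ab sb.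
  move=> i j; rewrite Emx_entry.
  case: (eqVneq i a) => [->|ia]; case: (eqVneq j b) => [->|jb] /=;
    rewrite ?addr0 ?abs_delta //.
  by rewrite (negbTE nab) add0r abs1.
move=> _ /(_ a b); rewrite zd inv_diag // diag_triple Emx_entry (negbTE nab).
rewrite !eqxx add0r mulr1 !mxE absM absV //.
  have nzb : z b b != 0 by have := nz b; rewrite mxE.
  by rewrite ler_pdivrMr ?mul1r //; apply: abs_gt0.
by have := nz b; rewrite mxE.
Qed.


Lemma Zplus_of_diag n (J' : {set 'I_n.-1}) (d : 'rV[L]_n) :
  (forall i, d 0 i != 0) -> (forall a b, sameblk J' a b -> d 0 a = d 0 b) ->
  (forall a b : 'I_n, (a < b)%N -> absL (d 0 a) <= absL (d 0 b)) ->
  Zplus absL J' (diag_mx d).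
Proof.
move=> nz cst mono.
have Ud : diag_mx d \in unitmx.
  by rewrite unitmxE det_diag unitfE; apply/prodf_neq0 => i _.
have tri1 a b : d 0 a * (a == b)%:R * (d 0 b)^-1 = (a == b)%:R.
  case: (eqVneq a b) => [<-|ab]; first by rewrite mulr1 mulfV.
  by rewrite mulr0 mul0r.
have tri2 a b : (d 0 a)^-1 * (a == b)%:R * d 0 b = (a == b)%:R.
  case: (eqVneq a b) => [<-|ab]; first by rewrite mulr1 mulVf.
  by rewrite mulr0 mul0r.
have q (a b : 'I_n) : (a < b)%N -> absL (d 0 a) / absL (d 0 b) <= 1.
  by move=> ab; rewrite ler_pdivrMr ?mul1r ?mono //; apply: abs_gt0.
have ge0 (a b : 'I_n) : 0 <= absL (d 0 a) / absL (d 0 b).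
  by rewrite mulr_ge0 ?invr_ge0 ?abs_ge0.
split.
- split.
    apply/andP; split=> //; apply/forallP => a; apply/forallP => b.
    apply/implyP => nsb; rewrite mxE.
    have ab : a != b by apply: contraNneq nsb => ->; rewrite sameblk_refl.
    by rewrite (negbTE ab) mulr0n.
  move=> m /andP [_ offm]; apply/matrixP => a b.
  rewrite mul_diag_mx mul_mx_diag !mxE.
  case sb: (sameblk J' a b); first by rewrite (cst a b sb) mulrC.
  have /eqP -> : m a b == 0 by have := forallP (forallP offm a) b; rewrite sb.
  by rewrite mulr0 mul0r.
- move=> x [Nx Ix]; rewrite inv_diag //; split.
    apply/forallP => a; apply/forallP => b; rewrite diag_triple !mxE.
    have := forallP (forallP Nx a) b; case/orP => [->//|/eqP ->].
    by rewrite tri1 eqxx orbT.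
  move=> a b; rewrite diag_triple !mxE.
  have := forallP (forallP Nx a) b; case/orP => [/andP [lt _]|/eqP ->].
    rewrite !absM absV // mulrAC; apply: mulr_ile1; rewrite ?abs_ge0 ?q //.
  by rewrite tri1 abs_delta.
- move=> x [Nx Ix Cx]; rewrite inv_diag //; split.
    apply/forallP => a; apply/forallP => b; rewrite diag_triple !mxE.
    have := forallP (forallP Nx a) b; case/orP => [->//|/eqP ->].
    apply/orP; right; case: (eqVneq a b) => [<-|ab]; last by rewrite mulr0 mul0r.
    by rewrite mulr1 mulVf.
    move=> a b; rewrite diag_triple !mxE.
    have := forallP (forallP Nx a) b; case/orP => [/andP [lt _]|/eqP ->].
      rewrite !absM absV // mulrC mulrA; apply: mulr_ile1; rewrite ?abs_ge0 //.
      exact: q.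
    case: (eqVneq a b) => [<-|ab]; last by rewrite mulr0 mul0r abs0 ler01.
    by rewrite ?eqxx mulr1 mulVf // abs1.
  move=> a b; rewrite diag_triple !mxE.
  have := forallP (forallP Nx a) b; case/orP => [/andP [lt _]|/eqP ->].
    have ab : (a == b) = false by apply/negbTE; rewrite neq_ltn lt orbT.
    have := Cx a b; rewrite ab subr0 => Cab.
    apply: le_lt_trans Cab.
    rewrite subr0 !absM absV // mulrC mulrA ler_piMl ?abs_ge0 //.
    exact: q.
  case: (eqVneq a b) => [<-|ab2]; last by rewrite mulr0 mul0r subrr abs0 ltr01.
  by rewrite mulr1 mulVf // subrr abs0 ltr01.
Qed.

End Abs.

Lemma prod_cmp (R : realFieldType) n (c : 'I_n -> R) (X : pred ('I_n * 'I_n))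
    (w : 'S_n) :
  (forall i, 0 < c i) -> (forall a b : 'I_n, (a < b)%N -> c a <= c b) ->
  [/\ \prod_(p | X p && (p.1 < p.2)%N) (c p.1 / c p.2) <=
      \prod_(p | X p && (w p.1 < w p.2)%N) (c p.1 / c p.2) &
   forall a b : 'I_n, X (a, b) -> (a < b)%N -> (w b < w a)%N -> c a < c b ->
      \prod_(p | X p && (p.1 < p.2)%N) (c p.1 / c p.2) <
      \prod_(p | X p && (w p.1 < w p.2)%N) (c p.1 / c p.2)].
Proof.
move=> cpos mono.
set F := fun p : 'I_n * 'I_n => c p.1 / c p.2.
have Fpos p : 0 < F p by rewrite /F divr_gt0.
set T := \prod_(p | (X p && (p.1 < p.2)%N) && (w p.1 < w p.2)%N) F p.
set A := \prod_(p | (X p && (p.1 < p.2)%N) && ~~ (w p.1 < w p.2)%N) F p.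
set B := \prod_(p | (X p && (w p.1 < w p.2)%N) && ~~ (p.1 < p.2)%N) F p.
have eL : \prod_(p | X p && (p.1 < p.2)%N) F p = T * A.
  by rewrite (bigID (fun p : 'I_n * 'I_n => (w p.1 < w p.2)%N)).
have eR : \prod_(p | X p && (w p.1 < w p.2)%N) F p = T * B.
  rewrite (bigID (fun p : 'I_n * 'I_n => (p.1 < p.2)%N)) /T; congr (_ * _).
  by apply: eq_bigl => p; rewrite andbAC.
rewrite eL eR.
have Tpos : 0 < T by apply: prodr_gt0.
have Ale p : (X p && (p.1 < p.2)%N) && ~~ (w p.1 < w p.2)%N -> 0 <= F p <= 1.
  move=> /andP [/andP [_ lt] _].
  apply/andP; split; first exact: ltW.
  by rewrite /F ler_pdivrMr // mul1r; apply: mono.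
have A1 : A <= 1 by apply: prodr_ile1.
have B1 : 1 <= B.
  apply: (big_ind (fun x => 1 <= x)) => //; first exact: mulr_ege1.
  move=> p /andP [/andP [_ wlt] nlt].
  have ne : p.1 != p.2 by apply: contraTneq wlt => ->; rewrite ltnn.
  have lt : (p.2 < p.1)%N by rewrite ltnNge leq_eqVlt negb_or ne nlt.
  by rewrite /F ler_pdivlMr // mul1r; apply: mono.
split.
  apply: (@le_trans _ _ T); first by rewrite ler_piMr // ltW.
  by rewrite ler_peMr // ltW.
move=> a b Xab ab wba cab.
have A2 : A < 1.
  rewrite /A (bigD1 (a, b)) /=; last by rewrite Xab ab -leqNgt ltnW.
  apply: (@le_lt_trans _ _ (F (a, b))).
    apply: ler_piMr; first exact: ltW.
    apply: prodr_ile1 => p /andP [p1 _].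
    exact: Ale.
  by rewrite /F ltr_pdivrMr // mul1r.
apply: (@lt_le_trans _ _ T); first by rewrite gtr_pMr.
by rewrite ler_peMr // ltW.
Qed.

Lemma ord_neq n (x y : 'I_n) : x != y -> (x : nat) <> y.
Proof. by move=> h e; move/eqP: h; apply; apply: val_inj. Qed.

Lemma exists_descent n (w : 'S_n) : w != 1%g ->
  exists a b : 'I_n, (b : nat) = a.+1 /\ (w b < w a)%N.
Proof.
move=> w1.
case: (boolP [exists a : 'I_n, exists b : 'I_n, ((b : nat) == a.+1) && (w b < w a)%N]).
  by case/existsP => a /existsP [b /andP [/eqP e lt]]; exists a, b.
move/existsPn => H; exfalso; move/negP: w1; apply; apply/eqP/permP => j.
rewrite perm1.
have inc (a b : 'I_n) : (b : nat) = a.+1 -> (w a < w b)%N.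
  move=> e; have := H a; move/existsPn/(_ b); rewrite e eqxx /= -leqNgt.
  rewrite leq_eqVlt => /orP [/eqP/val_inj/perm_inj ab | //].
  by move: e; rewrite ab; lia.
have ge k : forall j : 'I_n, (j : nat) = k -> (k <= w j)%N.
  elim: k => [//|k IH] j0 ej.
  have kn : (k < n)%N by have := ltn_ord j0; lia.
  have := inc (Ordinal kn) j0 ej; have := IH (Ordinal kn) erefl; simpl; lia.
have le k : forall j : 'I_n, (j + k = n.-1)%N -> (w j <= j)%N.
  elim: k => [|k IH] j0 ej.
    by have := ltn_ord (w j0); lia.
  have kn : (j0.+1 < n)%N by lia.
  have := inc j0 (Ordinal kn) erefl; have := IH (Ordinal kn) (ltac:(simpl; lia)).
  simpl; lia.
apply/val_inj/eqP; rewrite eqn_leq (le (n.-1 - j)%N j) ?(ge j j) //.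
by have := ltn_ord j; lia.
Qed.

Lemma length_drop n (w : 'S_n) (a b : 'I_n) : (b : nat) = a.+1 -> (w b < w a)%N ->
  (perm_length (tperm a b * w)%g < perm_length w)%N.
Proof.
move=> eb wab; set s := tperm a b.
set I1 := [set p : 'I_n * 'I_n | (p.1 < p.2)%N && ((s * w)%g p.2 < (s * w)%g p.1)%N].
set I2 := [set p : 'I_n * 'I_n | (p.1 < p.2)%N && (w p.2 < w p.1)%N].
change (#|I1| < #|I2|)%N.
pose phi := fun p : 'I_n * 'I_n => (s p.1, s p.2).
have phi_inj : injective phi.
  by move=> [p1 p2] [q1 q2] [/perm_inj -> /perm_inj ->].
have slt (x y : 'I_n) : (x < y)%N -> (x, y) != (a, b) -> (s x < s y)%N.
  move=> lt ne; rewrite /s.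
  have nab : (a : nat) <> b by lia.
  have ne' : (x : nat) <> a \/ (y : nat) <> b.
    move: ne; rewrite xpair_eqE negb_and => /orP [] /ord_neq h; by [left|right].
  case: tpermP => [ex|ex|nxa nxb]; case: tpermP => [ey|ey|nya nyb];
    repeat match goal with
    | h : is_true (_ != _) |- _ => move/ord_neq: h => h
    | h : @eq _ _ _ |- _ => move/(congr1 (@nat_of_ord _)): h => h
    end; lia.
have sub : I1 \subset phi @^-1: (I2 :\ (a, b)).
  apply/subsetP => -[p1 p2]; rewrite !inE /= !permM => /andP [lt wl].
  have ne : (p1, p2) != (a, b).
    apply/negP => /eqP [e1 e2]; subst p1 p2.
    by move: wl; rewrite /s tpermL tpermR => /(ltn_trans wab); rewrite ltnn.
  rewrite wl slt // andbT.
  rewrite /phi /= ?andbT; apply/negP => /eqP [e1 e2].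
  have h1 : p1 = s a by rewrite -e1 /s tpermK.
  have h2 : p2 = s b by rewrite -e2 /s tpermK.
  move: lt; rewrite h1 h2 /s tpermL tpermR; lia.
have := subset_leq_card sub; rewrite card_preimset // => h.
have : (a, b) \in I2 by rewrite inE /= wab; lia.
rewrite (cardsD1 (a, b) I2) => ->; lia.
Qed.

Unset Implicit Arguments.
Set Strict Implicit.

Theorem lemma4p18 (L : fieldType) (R : realFieldType) (absL : L -> R) (pi : L)
    (n : nat) (J J' J1 J2 : {set 'I_n.-1}) (w : 'S_n) :
  nonarch_dv_abs absL pi ->
  minrep J' J w ->
  (* Q_{w^-1} = M_{w^-1} |x (N_{w^-1} N), with
     M_{w^-1} = M cap w^-1 M' w and N_{w^-1} = M cap w^-1 N' w *)
  (forall g : 'M[L]_n, Mset J1 g =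
     Mset J g && Mset J' (perm_mx w *m g *m perm_mx w^-1)) ->
  (forall g : 'M[L]_n, Nset J1 g <->
     exists a b, [/\ Mset J a, Nset J' (perm_mx w *m a *m perm_mx w^-1),
                     Nset J b & g = a *m b]) ->
  (* Q'_w = M'_w |x (N'_w N'), with
     M'_w = M' cap w M w^-1 and N'_w = M' cap w N w^-1 *)
  (forall g : 'M[L]_n, Mset J2 g =
     Mset J' g && Mset J (perm_mx w^-1 *m g *m perm_mx w)) ->
  (forall g : 'M[L]_n, Nset J2 g <->
     exists a b, [/\ Mset J' a, Nset J (perm_mx w^-1 *m a *m perm_mx w),
                     Nset J' b & g = a *m b]) ->
  (forall z : 'M[L]_n, Zplus absL J' z ->
     delta absL J2 z <= delta absL J1 (perm_mx w^-1 *m z *m perm_mx w)) /\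
  (w != 1%g -> exists z : 'M[L]_n, Zplus absL J' z /\
     delta absL J2 z < delta absL J1 (perm_mx w^-1 *m z *m perm_mx w)).
Proof.
move=> Hab mr HM1 _ HM2 _.
have sb1 := sbJ1 HM1.
have sb2 := sbJ2 HM2.
set X := fun p : 'I_n * 'I_n =>
  ~~ (sameblk J' p.1 p.2 && sameblk J (w p.1) (w p.2)).
have key (d : 'rV[L]_n) : (forall i, d 0 i != 0) ->
  delta absL J2 (diag_mx d) =
    \prod_(p | X p && (p.1 < p.2)%N) (absL (d 0 p.1) / absL (d 0 p.2)) /\
  delta absL J1 (perm_mx w^-1 *m diag_mx d *m perm_mx w) =
    \prod_(p | X p && (w p.1 < w p.2)%N) (absL (d 0 p.1) / absL (d 0 p.2)).
  move=> nz; split.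
    rewrite (delta_diag Hab) //; apply: eq_bigl => p.
    by rewrite inE /before sb2 andbC.
  have -> : perm_mx w^-1 *m diag_mx d *m perm_mx w =
            diag_mx (\row_a d 0 ((w^-1)%g a)).
    by apply/matrixP => a b; rewrite conj_entry' !mxE (inj_eq perm_inj).
  rewrite (delta_diag Hab); last by move=> i; rewrite mxE.
  rewrite (reindex_inj (h := fun q : 'I_n * 'I_n => (w q.1, w q.2))) /=; last first.
    by move=> [p1 p2] [q1 q2] [/perm_inj -> /perm_inj ->].
  apply: eq_big => q; last by rewrite !mxE !permK.
  rewrite inE /before sb1 !permK /X andbC; congr (~~ _ && _).
  by rewrite andbC.
split.
  move=> z /(Zplus_form Hab) [d [zd nz mono]].
  have [k1 k2] := key d nz; rewrite zd k1 k2.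
  have [le _] := prod_cmp X w (fun i => abs_gt0 Hab (nz i)) mono.
  exact: le.
move=> w1; have [a [b [eb wba]]] := exists_descent w1.
case sb: (sameblk J' a b).
  exfalso.
  have := mr (tperm a b) 1%g.
  have inW : tperm a b \in Wpar J'.
    rewrite inE; apply/forallP => i; case: tpermP => [->|->|_ _].
    - by rewrite sb.
    - by rewrite sameblk_sym sb.
    - by rewrite sameblk_refl.
  have in1 : (1%g : 'S_n) \in Wpar J.
    by rewrite inE; apply/forallP => i; rewrite perm1 sameblk_refl.
  move=> /(_ inW in1); rewrite mulg1 => h.
  by have := length_drop eb wba; rewrite ltnNge h.
have ab : (a <= b)%N by lia.
have [k kab kJ] : exists2 k : 'I_n.-1, ((a <= k) && (k < b))%N & k \notin J'.
  move/negbT: sb; rewrite /sameblk => /forallPn [k]; rewrite negb_imply.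
  rewrite (minn_idPl ab) (maxn_idPr ab) => /andP [h1 h2].
  by exists k.
set d : 'rV[L]_n := \row_i (if (i <= k)%N then pi else 1).
have [pnz ppos plt1] := pi_props Hab.
have nz i : d 0 i != 0 by rewrite mxE; case: ifP => _; rewrite ?oner_eq0.
have cst i j : sameblk J' i j -> d 0 i = d 0 j.
  move=> sbij.
  have hk : ~~ ((minn i j <= k) && (k < maxn i j))%N.
    by apply: contra kJ => h; exact: (implyP (forallP sbij k) h).
  rewrite !mxE; case: (leqP i k) => hi; case: (leqP j k) => hj //;
    exfalso; move: hk; lia.
have mono (i j : 'I_n) : (i < j)%N -> absL (d 0 i) <= absL (d 0 j).
  move=> ij; rewrite !mxE; case: (leqP i k) => hi; case: (leqP j k) => hj //.
  - by rewrite (abs1 Hab) ltW.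
  - by exfalso; lia.
exists (diag_mx d); split; first exact: (Zplus_of_diag Hab nz cst mono).
have [k1 k2] := key d nz; rewrite k1 k2.
have [_ st] := prod_cmp X w (fun i => abs_gt0 Hab (nz i)) mono.
apply: (st a b); rewrite /X /= ?sb //; first lia.
rewrite !mxE; case: (leqP a k) => ha; case: (leqP b k) => hb; try lia.
by rewrite (abs1 Hab).
Qed.
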